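(* Assume the setting of the context, with $\|\widehat B^{k,1}\|_F\le B$ and $\widehat\ell_1=\ell_1(1+B)^2$. Fix $\widehat x^k$, $\delta_k\in(0,\delta_{\max}]$ and constants $\kappa_{dcp},\kappa_{ef},\kappa_{ed}>0$. Let $y^{i,*}:\mathcal{B}(\widehat x^k,\delta_k)\to\mathcal{Y}$ satisfy $$\|y^{i,*}(x)-y^{k,*}(x)\|\le\min\Big\{\frac{\kappa_{ed}\delta_k}{\widehat\ell_1},\ \frac{\kappa_{ef}\delta_k^2}{L_1}\Big\}\quad\forall x\in\mathcal{B}(\widehat x^k,\delta_k),$$ let $g_k=\nabla_x\mathcal{L}^k(\widehat x^k,y^{i,*}(\widehat x^k))$, and let $s^k$ with $\|s^k\|\le\delta_k$ satisfy $\mathcal{L}^k(\widehat x^k,y^{i,*}(\widehat x^k))-\mathcal{L}^k(\widehat x^k+s^k,y^{i,*}(\widehat x^k+s^k))\ge\kappa_{dcp}\|g_k\|\min\{\delta_k,1\}$. Assume $|\Phi(x)-\Phi^k(x)|\le\kappa_{ef}\delta_k^2$ for all $x\in\mathcal{B}(\widehat x^k,\delta_k)$ and $\|\nabla\Phi(\widehat x^k)\|-\|\nabla\Phi^k(\widehat x^k)\|\le\kappa_{ed}\delta_k$. If $$\delta_k\le\frac{\|\nabla\Phi(\widehat x^k)\|}{\big(\frac{8\kappa_{ef}}{\kappa_{dcp}}+2\kappa_{ed}\big)\max\{1,\delta_{\max}\}},$$ then $$\Phi(\widehat x^k+s^k)-\Phi(\widehat x^k)\le-C_1\|\nabla\Phi(\widehat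 x^k)\|\delta_k,\qquad C_1=\frac{4\kappa_{dcp}\kappa_{ef}}{(8\kappa_{ef}+2\kappa_{ed}\kappa_{dcp})\max\{\delta_{\max},1\}}.$$
   Context: Standing assumptions: $l:\mathbb{R}^n\times\mathbb{R}^m\times\mathbb{R}^d\to\mathbb{R}$ is $\ell_1$-smooth and $L_1$-Lipschitz; $\psi:\mathbb{R}^n\to\mathbb{R}^d$ is twice differentiable, $\ell_0$-smooth and $L_0$-Lipschitz; $\mathcal{Y}\subset\mathbb{R}^m$ is nonempty, closed, convex, bounded; $l(x,\cdot,z)$ is $\mu$-strongly concave on $\mathcal{Y}$; $\tilde\epsilon$ is a random vector in $\mathbb{R}^d$ with compact support and zero mean. $\mathcal{L}(x,y)=\mathbb{E}_{\tilde\epsilon}[l(x,y,\psi(x)+\tilde\epsilon)]$, $\Phi(x)=\max_{y\in\mathcal{Y}}\mathcal{L}(x,y)$ (differentiable). $\mathcal{B}(x,\delta)=\{z:\|z-x\|\le\delta\}$. Local model at iteration $k$: data $x^i\in\mathcal{B}(\widehat x^k,\delta_k)$, $\omega^i=\psi(x^i)+\epsilon^i$ ($i=1,\dots,N_k$), least-squares affine coefficients $\widehat B^{k,1},\widehat B^{k,0}$, residuals $e^{k,i}=\omega^i-(\widehat B^{k,1})^\top x^i-(\widehat B^{k,0})^\top$, $m_k(x,e)=(\widehat B^{k,1})^\top x+(\widehat B^{k,0})^\top+e$, $\mathcal{L}^k(x,y)=\frac1{N_k}\sum_i l(x,y,m_k(x,e^{k,i}))$, $\Phi^k(x)=\max_{y\in\mathcal{Y}}\mathcal{L}^k(x,y)$,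 $y^{k,*}(x)=\arg\max_{y\in\mathcal{Y}}\mathcal{L}^k(x,y)$. (In the paper the two accuracy conditions on $\Phi-\Phi^k$ form an event holding with probability at least $\alpha$ for large enough samples.) *)

(* Defs.v *)
From HB Require Import structures.
From mathcomp Require Import all_boot all_order all_algebra.
From mathcomp Require Import all_classical all_reals all_analysis.
Set Implicit Arguments.
Unset Strict Implicit.
Unset Printing Implicit Defensive.
Import Order.TTheory GRing.Theory Num.Theory.
Import numFieldNormedType.Exports.
Local Open Scope classical_set_scope.
Local Open Scope ring_scope.

Section Defs.
Variable R : realType.

Definition enorm (p : nat) (v : 'rV[R]_p) : R :=
  Num.sqrt (\sum_(i < p) v ord0 i ^+ 2).

Definition fnorm (p q : nat) (A : 'M[R]_(p, q)) : R :=
  Num.sqrt (\sum_(i < p) \sum_(j < q) A i j ^+ 2).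

Definition eball (p : nat) (c : 'rV[R]_p) (r : R) : set 'rV[R]_p :=
  [set z | enorm (z - c) <= r].

Definition ebasis (p : nat) (i : 'I_p) : 'rV[R]_p := delta_mx ord0 i.

Definition egrad (p : nat) (f : 'rV[R]_p -> R) (x : 'rV[R]_p) : 'rV[R]_p :=
  \row_(i < p) derive f x (ebasis i).

(* Jacobian of a vector function f : R^p -> R^q, as a p x q matrix
   (row i = partial derivative along e_i), so that f(x + v) ~ f x + v *m J. *)
Definition ejac (p q : nat) (f : 'rV[R]_p -> 'rV[R]_q) (x : 'rV[R]_p)
  : 'M[R]_(p, q) :=
  \matrix_(i < p, j < q) (derive f x (ebasis i)) ord0 j.

Definition e_lipschitz (p : nat) (L : R) (f : 'rV[R]_p -> R) : Prop :=
  forall x y, `|f x - f y| <= L * enorm (x - y).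

Definition e_lipschitzV (p q : nat) (L : R) (f : 'rV[R]_p -> 'rV[R]_q) : Prop :=
  forall x y, enorm (f x - f y) <= L * enorm (x - y).

Definition e_smooth (p : nat) (L : R) (f : 'rV[R]_p -> R) : Prop :=
  (forall x, differentiable f x) /\
  (forall x y, enorm (egrad f x - egrad f y) <= L * enorm (x - y)).

(* L-e_smooth vector function: differentiable with Jacobian L-Lipschitz in
   operator norm (written out: ||v (J x - J y)|| <= L ||x - y|| ||v||). *)
Definition e_smoothV (p q : nat) (L : R) (f : 'rV[R]_p -> 'rV[R]_q) : Prop :=
  (forall x, differentiable f x) /\
  (forall x y (v : 'rV[R]_p),
      enorm (v *m (ejac f x - ejac f y)) <= L * enorm (x - y) * enorm v).

Definition twice_differentiable (p q : nat) (f : 'rV[R]_p -> 'rV[R]_q) : Prop :=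
  (forall x, differentiable f x) /\ (forall x, differentiable (ejac f) x).

Definition uncurry3 (n m d : nat) (l : 'rV[R]_n -> 'rV[R]_m -> 'rV[R]_d -> R)
  (w : 'rV[R]_(n + m + d)) : R :=
  l (lsubmx (lsubmx w)) (rsubmx (lsubmx w)) (rsubmx w).

Definition e_convex_set (p : nat) (Y : set 'rV[R]_p) : Prop :=
  forall y1 y2 (t : R), Y y1 -> Y y2 -> 0 <= t <= 1 ->
    Y (t *: y1 + (1 - t) *: y2).

Definition e_bounded_set (p : nat) (Y : set 'rV[R]_p) : Prop :=
  exists M : R, forall y, Y y -> enorm y <= M.

Definition strongly_concave_on (p : nat) (mu : R) (Y : set 'rV[R]_p)
  (g : 'rV[R]_p -> R) : Prop :=
  forall y1 y2 (t : R), Y y1 -> Y y2 -> 0 <= t <= 1 ->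
    t * g y1 + (1 - t) * g y2 + mu / 2 * t * (1 - t) * enorm (y1 - y2) ^+ 2
      <= g (t *: y1 + (1 - t) *: y2).

End Defs.

(* Main.v *)
Require Import Defs.
From HB Require Import structures.
From mathcomp Require Import all_boot all_order all_algebra.
From mathcomp Require Import all_classical all_reals all_analysis.
From mathcomp Require Import ring lra.
Import Order.TTheory GRing.Theory Num.Theory.
Import numFieldNormedType.Exports.
Local Open Scope classical_set_scope.
Local Open Scope ring_scope.

Set Implicit Arguments.
Unset Strict Implicit.
Unset Printing Implicit Defensive.


Section Norms.
Variable R : realType.

Definition ss (p : nat) (v : 'rV[R]_p) : R := \sum_(i < p) v ord0 i ^+ 2.
Definition ip (p : nat) (u v : 'rV[R]_p) : R := \sum_(i < p) u ord0 i * v ord0 i.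

Lemma ss_ge0 p (v : 'rV[R]_p) : 0 <= ss v.
Proof. by apply: sumr_ge0 => i _; exact: sqr_ge0. Qed.

Lemma enormE p (v : 'rV[R]_p) : enorm v = Num.sqrt (ss v).
Proof. by []. Qed.

Lemma enorm_ge0 p (v : 'rV[R]_p) : 0 <= enorm v.
Proof. exact: sqrtr_ge0. Qed.

Lemma enorm_sq p (v : 'rV[R]_p) : enorm v ^+ 2 = ss v.
Proof. by rewrite enormE sqr_sqrtr // ss_ge0. Qed.

Lemma ipvv p (v : 'rV[R]_p) : ip v v = ss v.
Proof. by apply: eq_bigr => i _; rewrite expr2. Qed.

Lemma ss_eq0 p (v : 'rV[R]_p) : ss v = 0 -> forall i, v ord0 i = 0.
Proof.
move=> h i; have := h; rewrite /ss => /eqP; rewrite psumr_eq0; last first.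
  by move=> j _; exact: sqr_ge0.
by move=> /allP /(_ i (mem_index_enum _)) /=; rewrite sqrf_eq0 => /eqP.
Qed.

Lemma CS p (u v : 'rV[R]_p) : ip u v ^+ 2 <= ss u * ss v.
Proof.
have [u0|upos] := eqVneq (ss u) 0.
  rewrite /ip (eq_bigr (fun _ => 0)) ?big1 ?expr0n /= ?mulr_ge0 ?ss_ge0 //.
  by move=> i _; rewrite (ss_eq0 u0) mul0r.
have hu : 0 < ss u by rewrite lt_def upos ss_ge0.
set t := ip u v / ss u.
have h0 : 0 <= \sum_(i < p) (u ord0 i * t - v ord0 i) ^+ 2.
  by apply: sumr_ge0 => i _; exact: sqr_ge0.
have e : \sum_(i < p) (u ord0 i * t - v ord0 i) ^+ 2
         = t ^+ 2 * ss u - 2 * t * ip u v + ss v.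
  rewrite (eq_bigr (fun i => t ^+ 2 * u ord0 i ^+ 2 - 2 * t * (u ord0 i * v ord0 i)
     + v ord0 i ^+ 2)); last by move=> i _; ring.
  by rewrite big_split /= sumrB -!mulr_sumr.
have : 0 <= t ^+ 2 * ss u - 2 * t * ip u v + ss v by rewrite -e.
rewrite /t => h1.
have h2 : (ip u v / ss u) ^+ 2 * ss u - 2 * (ip u v / ss u) * ip u v
   = - (ip u v ^+ 2 / ss u).
  by field.
rewrite h2 in h1.
have : ip u v ^+ 2 / ss u <= ss v by lra.
by rewrite ler_pdivrMr // mulrC.
Qed.

Lemma CSabs p (u v : 'rV[R]_p) : `|ip u v| <= enorm u * enorm v.
Proof.
rewrite -(ler_pXn2r (n:=2)) ?nnegrE ?mulr_ge0 ?enorm_ge0 //.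
by rewrite real_normK ?num_real // exprMn !enorm_sq CS.
Qed.

Lemma CSle p (u v : 'rV[R]_p) : ip u v <= enorm u * enorm v.
Proof. exact: le_trans (ler_norm _) (CSabs u v). Qed.

Lemma enorm_le p q (a : 'rV[R]_p) (b : 'rV[R]_q) c :
  0 <= c -> ss a <= c ^+ 2 * ss b -> enorm a <= c * enorm b.
Proof.
move=> c0 h; rewrite !enormE -[c in c * _](ger0_norm c0) -sqrtr_sqr -sqrtrM ?sqr_ge0 //.
by rewrite ler_sqrt // mulr_ge0 // ?sqr_ge0 // ss_ge0.
Qed.

Lemma ss_add p (u v : 'rV[R]_p) : ss (u + v) = ss u + 2 * ip u v + ss v.
Proof.
rewrite /ss /ip mulr_sumr -!big_split /=; apply: eq_bigr => i _.
by rewrite !mxE; ring.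
Qed.

Lemma enorm_triangle p (u v : 'rV[R]_p) : enorm (u + v) <= enorm u + enorm v.
Proof.
rewrite -(ler_pXn2r (n:=2)) ?nnegrE ?addr_ge0 ?enorm_ge0 //.
rewrite enorm_sq ss_add sqrrD !enorm_sq.
have := CSle u v; lra.
Qed.

Lemma enorm_sub_le p (u v : 'rV[R]_p) : enorm u <= enorm v + enorm (u - v).
Proof. by have := enorm_triangle v (u - v); rewrite addrC subrK. Qed.

Lemma ss_opp p (u : 'rV[R]_p) : ss (- u) = ss u.
Proof. by apply: eq_bigr => i _; rewrite mxE sqrrN. Qed.

Lemma enorm_opp p (u : 'rV[R]_p) : enorm (- u) = enorm u.
Proof. by rewrite !enormE ss_opp. Qed.

Lemma enorm_distC p (u v : 'rV[R]_p) : enorm (u - v) = enorm (v - u).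
Proof. by rewrite -enorm_opp opprB. Qed.

Lemma ss_row_mx p q (u : 'rV[R]_p) (v : 'rV[R]_q) :
  ss (row_mx u v) = ss u + ss v.
Proof.
rewrite /ss big_split_ord /=; congr (_ + _); apply: eq_bigr => i _.
  by rewrite row_mxEl.
by rewrite row_mxEr.
Qed.

Lemma ss0 p : ss (0 : 'rV[R]_p) = 0.
Proof. by rewrite /ss big1 // => i _; rewrite mxE expr0n. Qed.

Lemma ip_sum p (a : 'rV[R]_p) (q : nat) (k : 'I_q -> R) (w : 'I_q -> 'rV[R]_p) :
  ip a (\sum_(j < q) k j *: w j) = \sum_(j < q) k j * ip a (w j).
Proof.
rewrite /ip; under eq_bigr do rewrite summxE mulr_sumr.
rewrite exchange_big /=; apply: eq_bigr => j _; rewrite mulr_sumr.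
by apply: eq_bigr => i _; rewrite mxE mulrCA.
Qed.

Lemma ipBl p (a b u : 'rV[R]_p) : ip (a - b) u = ip a u - ip b u.
Proof.
by rewrite /ip -sumrB; apply: eq_bigr => i _; rewrite !mxE mulrBl.
Qed.

Lemma ipC p (a b : 'rV[R]_p) : ip a b = ip b a.
Proof. by apply: eq_bigr => i _; rewrite mulrC. Qed.

Lemma ss_mul p q (v : 'rV[R]_p) (M : 'M[R]_(p, q)) :
  ss (v *m M) <= ss v * fnorm M ^+ 2.
Proof.
rewrite /fnorm sqr_sqrtr; last by apply: sumr_ge0 => i _; apply: sumr_ge0 => j _;
  exact: sqr_ge0.
rewrite exchange_big mulr_sumr /ss; apply: ler_sum => k _.
rewrite mxE.
have := CS v (\row_j M j k).
have -> : ip v (\row_j M j k) = \sum_j v ord0 j * M j k.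
  by apply: eq_bigr => j _; rewrite mxE.
have -> : ss (\row_j M j k) = \sum_j M j k ^+ 2.
  by apply: eq_bigr => j _; rewrite mxE.
done.
Qed.

End Norms.

Section Norms2.
Variable R : realType.
Lemma enormZ p (h : R) (v : 'rV[R]_p) : enorm (h *: v) = `|h| * enorm v.
Proof.
rewrite !enormE -sqrtr_sqr -sqrtrM ?sqr_ge0 //; congr Num.sqrt.
by rewrite /ss mulr_sumr; apply: eq_bigr => i _; rewrite mxE exprMn.
Qed.

Lemma cvg_sq (f : R -> R) (C : R) : 0 <= C ->
  (forall h, `|f h| ^+ 2 <= C * `|h|) -> f x @[x --> 0^'] --> 0.
Proof.
move=> C0 hf; apply/cvgr0Pnorm_le => e e0.
have d0 : 0 < e ^+ 2 / (C + 1) by rewrite divr_gt0 ?exprn_gt0 //; lra.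
near=> h.
have hh : `|h| <= e ^+ 2 / (C + 1) by near: h; apply: dnbhs0_le.
rewrite -(ler_pXn2r (n:=2)) ?nnegrE ?normr_ge0 ?(ltW e0) //.
apply: le_trans (hf h) _.
apply: le_trans (ler_wpM2l C0 hh) _.
rewrite mulrA ler_pdivrMr; last lra.
have : 0 <= e ^+ 2 by exact: sqr_ge0.
nra.
Unshelve. all: by end_near.
Qed.
End Norms2.


Section Der.
Variable R : realType.

Lemma derive_transfer (V1 V2 : normedModType R) (g : V1 -> R) (f : V2 -> R)
  a v b u :
  (forall h : R, g (h *: v + a) = f (h *: u + b)) ->
  (derivable g a v <-> derivable f b u) /\ derive g a v = derive f b u.
Proof.
move=> H.
have gf : g a = f b by have := H 0; rewrite !scale0r !add0r.
have E : (fun h : R => h^-1 *: ((g \o shift a) (h *: v) - g a)) =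
         (fun h : R => h^-1 *: ((f \o shift b) (h *: u) - f b)).
  by apply: funext => h /=; rewrite H gf.
by rewrite /derivable /derive E.
Qed.

Lemma DF q (F : 'rV[R]_q -> R) w u :
  differentiable F w -> derive F w u = ip (egrad F w) u.
Proof.
move=> dF; rewrite deriveE // {1}(row_sum_delta u) linear_sum /ip.
apply: eq_bigr => j _; rewrite linearZ /= mxE -deriveE //.
by rewrite mulrC.
Qed.


Lemma scale1R (h : R) : h *: (1 : R) = h.
Proof. by rewrite /GRing.scale /= mulr1. Qed.

Lemma core q (F : 'rV[R]_q -> R) ell1 : e_smooth ell1 F -> forall a b u,
  `|F (u + a) - F a - (F (u + b) - F b)| <= ell1 * enorm (a - b) * enorm u.
Proof.
case=> dF Lg a b u.
pose phi := fun t : R => F (t *: u + a) - F (t *: u + b).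
pose dphi := fun t : R => derive F (t *: u + a) u - derive F (t *: u + b) u.
have tr : forall c t, (derivable (fun s : R => F (s *: u + c)) t 1 <->
     derivable F (t *: u + c) u) /\
     derive (fun s : R => F (s *: u + c)) t 1 = derive F (t *: u + c) u.
  move=> c t; apply: derive_transfer => h.
  by rewrite scale1R scalerDl addrA.
have dv : forall c t, derivable (fun s : R => F (s *: u + c)) t 1.
  by move=> c t; apply/(tr c t).1/diff_derivable.
have der : forall t : R, is_derive t (1 : R) phi (dphi t).
  move=> t.
  have -> : phi = (fun s : R => F (s *: u + a)) - (fun s : R => F (s *: u + b)).
    by [].
  apply: DeriveDef; first exact: derivableB.
  by rewrite deriveB // (tr a t).2 (tr b t).2.
have cont : {within `[0, 1], continuous phi}.
  by apply: derivable_within_continuous => t _; case: (der t).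
have [c _ hc] := MVT (ltr01 : (0:R) < 1) (fun t _ => der t) cont.
have -> : F (u + a) - F a - (F (u + b) - F b) = phi 1 - phi 0.
  by rewrite /phi !scale1r !scale0r !add0r; ring.
rewrite hc subr0 mulr1 /dphi !DF // -ipBl.
apply: le_trans (CSabs _ _) _; apply: ler_wpM2r; first exact: enorm_ge0.
by have := Lg (c *: u + a) (c *: u + b); rewrite opprD addrACA subrr add0r.
Qed.

End Der.


Section Model.
Variables (R : realType) (n m d N : nat).
Variable F : 'rV[R]_(n + m + d) -> R.
Variable cs : 'I_N -> 'rV[R]_d.
Variable B1 : 'M[R]_(n, d).
Variable B : R.
Hypothesis HB : fnorm B1 <= B.
Hypothesis HN : (0 < N)%N.

Definition U (v : 'rV[R]_n) : 'rV[R]_(n + m + d) :=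
  row_mx (row_mx v (0 : 'rV[R]_m)) (v *m B1).
Definition W (x : 'rV[R]_n) (y : 'rV[R]_m) (i : 'I_N) : 'rV[R]_(n + m + d) :=
  row_mx (row_mx x y) (x *m B1 + cs i).
Definition Lk x y := N%:R^-1 * \sum_(i < N) F (W x y i).

Lemma WD v x y i : W (v + x) y i = U v + W x y i.
Proof.
by rewrite /W /U !add_row_mx add0r mulmxDl addrA.
Qed.

Lemma UZ (h : R) v : U (h *: v) = h *: U v.
Proof. by rewrite /U !scale_row_mx scaler0 scalemxAl. Qed.

Lemma UD u v : U (u + v) = U u + U v.
Proof. by rewrite /U !add_row_mx addr0 mulmxDl. Qed.


Lemma U0 : U 0 = 0.
Proof. by rewrite /U mul0mx !row_mx0. Qed.

Lemma WB x1 x2 y i : W x1 y i - W x2 y i = U (x1 - x2).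
Proof. by rewrite -{1}(subrK x2 x1) WD addrK. Qed.

Lemma Wy x y1 y2 i :
  W x y1 i - W x y2 i = row_mx (row_mx 0 (y1 - y2)) (0 : 'rV[R]_d).
Proof. by rewrite /W !opp_row_mx !add_row_mx !subrr. Qed.

Lemma B_ge0 : 0 <= B.
Proof. exact: le_trans (sqrtr_ge0 _) HB. Qed.

Lemma enorm_U v : enorm (U v) <= (1 + B) * enorm v.
Proof.
apply: enorm_le; first by have := B_ge0; lra.
rewrite /U !ss_row_mx ss0 addr0.
have h := ss_mul v B1.
have f0 : 0 <= fnorm B1 by exact: sqrtr_ge0.
have hs := ss_ge0 v.
have : fnorm B1 ^+ 2 <= B ^+ 2 by rewrite lerXn2r // ?nnegrE //; exact: B_ge0.
move=> hB2.
have : ss v * fnorm B1 ^+ 2 <= ss v * B ^+ 2 by exact: ler_wpM2l.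
have := B_ge0; nra.
Qed.

Lemma enorm_Wy x y1 y2 i : enorm (W x y1 i - W x y2 i) = enorm (y1 - y2).
Proof. by rewrite Wy !enormE !ss_row_mx !ss0 add0r addr0. Qed.

Lemma avg_le (a : 'I_N -> R) c : (forall i, `|a i| <= c) ->
  `|N%:R^-1 * \sum_(i < N) a i| <= c.
Proof.
move=> h; have Np : (0 : R) < N%:R by rewrite ltr0n.
rewrite normrM ger0_norm ?invr_ge0 ?ler0n //.
rewrite ler_pdivrMl //; apply: le_trans (ler_norm_sum _ _ _) _.
apply: le_trans (ler_sum _ (fun i _ => h i)) _.
by rewrite sumr_const card_ord mulr_natl.
Qed.

Lemma LkB x1 y1 x2 y2 : Lk x1 y1 - Lk x2 y2 =
  N%:R^-1 * \sum_(i < N) (F (W x1 y1 i) - F (W x2 y2 i)).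
Proof. by rewrite /Lk -mulrBr sumrB. Qed.

Variables (L1 ell1 : R).

Hypothesis L1ge0 : 0 <= L1.
Hypothesis ell1ge0 : 0 <= ell1.
Lemma Lk_lipx : e_lipschitz L1 F -> forall x1 x2 y,
  `|Lk x1 y - Lk x2 y| <= L1 * ((1 + B) * enorm (x1 - x2)).
Proof.
move=> hL x1 x2 y; rewrite LkB; apply: avg_le => i.
by apply: le_trans (hL _ _) _; rewrite WB; apply: ler_wpM2l; last exact: enorm_U.
Qed.

Lemma Lk_lipy : e_lipschitz L1 F -> forall x y1 y2,
  `|Lk x y1 - Lk x y2| <= L1 * enorm (y1 - y2).
Proof.
move=> hL x y1 y2; rewrite LkB; apply: avg_le => i.
by apply: le_trans (hL _ _) _; rewrite enorm_Wy.
Qed.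

Lemma Lk_cross : e_smooth ell1 F -> forall x v y1 y2,
  `|Lk (v + x) y1 - Lk x y1 - (Lk (v + x) y2 - Lk x y2)|
     <= ell1 * enorm (y1 - y2) * ((1 + B) * enorm v).
Proof.
move=> hs x v y1 y2; rewrite !LkB -mulrBr -sumrB; apply: avg_le => i.
rewrite !WD; apply: le_trans (core hs _ _ _) _.
rewrite enorm_Wy; apply: ler_wpM2l; last exact: enorm_U.
by rewrite mulr_ge0 // enorm_ge0.
Qed.

Lemma Lk_der : (forall w, differentiable F w) -> forall x y v,
  derivable (fun x => Lk x y) x v /\ derive (fun x => Lk x y) x v =
    N%:R^-1 * \sum_(i < N) ip (egrad F (W x y i)) (U v).
Proof.
move=> dF x y v.
have fe : (fun x => Lk x y) =
    N%:R^-1 \*: (\sum_(i < N) (fun x => F (W x y i))).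
  by apply: funext => z; rewrite /Lk /= fct_sumE.
have di : forall i, (derivable (fun x => F (W x y i)) x v <->
     derivable F (W x y i) (U v)) /\
    derive (fun x => F (W x y i)) x v = derive F (W x y i) (U v).
  by move=> i; apply: derive_transfer => h; rewrite WD UZ.
have dv : forall i, derivable (fun x => F (W x y i)) x v.
  by move=> i; apply/(di i).1/diff_derivable.
rewrite fe; split; first by apply: derivableZ; apply: derivable_sum.
rewrite deriveZ; last exact: derivable_sum.
rewrite derive_sum //; congr (_ * _); apply: eq_bigr => i _.
by rewrite (di i).2 DF.
Qed.



Lemma avg_ge (a : 'I_N -> R) c : (forall i, c <= a i) ->
  c <= N%:R^-1 * \sum_(i < N) a i.
Proof.
move=> h; have Np : (0 : R) < N%:R by rewrite ltr0n.
rewrite ler_pdivlMl //.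
apply: le_trans (ler_sum _ (fun i _ => h i)).
by rewrite sumr_const card_ord mulr_natl.
Qed.

Variables (Y : set 'rV[R]_m) (mu : R) (ys : 'rV[R]_n -> 'rV[R]_m).
Hypothesis Hconc : forall x i, strongly_concave_on mu Y (fun y => F (W x y i)).
Hypothesis HYc : e_convex_set Y.
Hypothesis Hys : forall x, Y (ys x) /\ forall y, Y y -> Lk x y <= Lk x (ys x).

Lemma qgrowth x y : Y y -> mu / 4 * enorm (y - ys x) ^+ 2 <= Lk x (ys x) - Lk x y.
Proof.
move=> Yy; have [Yys Hmax] := Hys x.
have t01 : 0 <= (2^-1 : R) <= 1 by apply/andP; split; lra.
set mid := 2^-1 *: ys x + (1 - 2^-1) *: y.
have Ym : Y mid by apply: HYc.
have hm := Hmax _ Ym.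
have : mu / 2 * 2^-1 * (1 - 2^-1) * enorm (ys x - y) ^+ 2 <=
    N%:R^-1 * \sum_(i < N) (F (W x mid i) -
        (2^-1 * F (W x (ys x) i) + (1 - 2^-1) * F (W x y i))).
  apply: avg_ge => i; have := Hconc x i Yys Yy t01; rewrite -/mid; lra.
have -> : N%:R^-1 * \sum_(i < N) (F (W x mid i) -
        (2^-1 * F (W x (ys x) i) + (1 - 2^-1) * F (W x y i))) =
    Lk x mid - (2^-1 * Lk x (ys x) + (1 - 2^-1) * Lk x y).
  by rewrite /Lk sumrB big_split /= -!mulr_sumr; ring.
rewrite enorm_distC; lra.
Qed.

Lemma PhikE x : sup [set Lk x y | y in Y] = Lk x (ys x).
Proof.
have [Yys Hmax] := Hys x.
apply/le_anti/andP; split.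
  apply: ge_sup; first by exists (Lk x (ys x)), (ys x).
  by move=> _ [y Yy <-]; exact: Hmax.
apply: ub_le_sup; last by exists (ys x).
by exists (Lk x (ys x)) => _ [y Yy <-]; exact: Hmax.
Qed.


Hypothesis mupos : 0 < mu.

Lemma danskin : (forall w, differentiable F w) -> e_smooth ell1 F ->
  e_lipschitz L1 F -> forall x v,
  derive (fun z => Lk z (ys z)) x v = derive (fun z => Lk z (ys x)) x v.
Proof.
move=> dF hs hL x v.
set y0 := ys x.
have [dv _] := Lk_der dF x y0 v.
pose q := fun h : R => h^-1 *: (Lk (h *: v + x) (ys (h *: v + x)) - Lk x y0).
pose r := fun h : R => h^-1 *: (Lk (h *: v + x) y0 - Lk x y0).
have -> : 'D_v (fun z => Lk z (ys z)) x = lim (q @ 0^') by [].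
have -> : 'D_v (fun z => Lk z y0) x = lim (r @ 0^') by [].
have hr : r @ 0^' --> lim (r @ 0^') by exact: dv.
pose K := ell1 * (1 + B) * enorm v.
have K0 : 0 <= K by rewrite /K !mulr_ge0 ?enorm_ge0 //; have := B_ge0; lra.
pose C' := K ^+ 2 * (8 * L1 * (1 + B) * enorm v / mu).
have bnd : forall h, `|q h - r h| ^+ 2 <= C' * `|h|.
  move=> h.
  set xh := h *: v + x; set yh := ys xh.
  have eqr : q h - r h = h^-1 * (Lk xh yh - Lk xh y0).
    by rewrite /q /r -scalerBr; congr (_ *: _); ring.
  have [Yyh Hmaxh] := Hys xh.
  have [Yy0 Hmax0] := Hys x.
  have D0 : 0 <= Lk xh yh - Lk xh y0 by rewrite subr_ge0; exact: Hmaxh.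
  have a0 : 0 <= `|h| * enorm v by rewrite mulr_ge0 ?enorm_ge0.
  set E := enorm (yh - y0).
  have E0 : 0 <= E by exact: enorm_ge0.
  have cr := Lk_cross hs x (h *: v) yh y0.
  rewrite -/xh enormZ in cr.
  have m0 := Hmax0 _ Yyh.
  have Dle : Lk xh yh - Lk xh y0 <= K * E * (`|h|).
    have rhs : ell1 * E * ((1 + B) * (`|h| * enorm v)) = K * E * `|h|.
      by rewrite /K; ring.
    rewrite -/E rhs in cr; case/ler_normlP: cr => c1 c2.
    rewrite -/yh in m0; lra.
  have qr : `|q h - r h| <= K * E.
    rewrite eqr; have [->|hn0] := eqVneq h 0.
      by rewrite invr0 mul0r normr0 mulr_ge0.
    rewrite normrM (ger0_norm D0) normfV.
    rewrite ler_pdivrMl ?normr_gt0 //; nra.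
  have l1 := Lk_lipx hL x xh y0.
  have l2 := Lk_lipx hL xh x yh.
  have exh : xh - x = h *: v by rewrite /xh addrK.
  rewrite enorm_distC exh enormZ in l1.
  rewrite exh enormZ in l2.
  have qg := qgrowth x Yyh; rewrite -/y0 -/yh -/E in qg.
  have Eq : E ^+ 2 <= 8 * L1 * (1 + B) * enorm v / mu * `|h|.
    have Hm := Hmaxh _ Yy0.
    move: l1 l2 => /ler_normlP [l1a l1b] /ler_normlP [l2a l2b].
    set T := L1 * ((1 + B) * (`|h| * enorm v)) in l1a l1b l2a l2b *.
    rewrite -/yh in Hm.
    have : mu * E ^+ 2 <= 8 * T by lra.
    have -> : 8 * L1 * (1 + B) * enorm v / mu * `|h| = 8 * T / mu.
      by rewrite /T; field; apply: lt0r_neq0.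
    by move=> hh; rewrite ler_pdivlMr // mulrC.
  have : `|q h - r h| ^+ 2 <= (K * E) ^+ 2.
    have KE0 : 0 <= K * E := mulr_ge0 K0 E0.
    by rewrite ler_pXn2r // nnegrE.
  rewrite exprMn => h1; apply: le_trans h1 _.
  by rewrite /C' -mulrA ler_wpM2l ?sqr_ge0.
have C0 : 0 <= C'.
  rewrite /C' mulr_ge0 ?sqr_ge0 // divr_ge0 ?(ltW mupos) //.
  by rewrite !mulr_ge0 ?enorm_ge0 //; have := B_ge0; lra.
have hqr := cvg_sq C0 bnd.
have hq : q @ 0^' --> lim (r @ 0^').
  have -> : q = (fun h => r h + (q h - r h)).
    by apply: funext => h; rewrite addrC subrK.
  rewrite -[X in _ --> X]addr0; exact: cvgD hr hqr.
by rewrite (cvg_lim _ hq).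
Qed.


Lemma grad_diff : (forall w, differentiable F w) -> e_smooth ell1 F ->
  forall x y1 y2,
  enorm (egrad (fun z => Lk z y1) x - egrad (fun z => Lk z y2) x)
    <= ell1 * (1 + B) * enorm (y1 - y2).
Proof.
move=> dF hs x y1 y2.
set D := egrad _ x - egrad _ x.
pose dd i := egrad F (W x y1 i) - egrad F (W x y2 i).
have DE : forall j, D ord0 j = N%:R^-1 * \sum_(i < N) ip (dd i) (U (ebasis R j)).
  move=> j; rewrite !mxE (Lk_der dF x y1 (ebasis R j)).2 (Lk_der dF x y2 _).2.
  rewrite -mulrBr -sumrB; congr (_ * _); apply: eq_bigr => i _.
  by rewrite ipBl.
have UD' : U D = \sum_(j < n) D ord0 j *: U (ebasis R j).
  rewrite {1}(row_sum_delta D) (big_morph U UD U0).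
  by apply: eq_bigr => j _; rewrite UZ.
have ssD : ss D = N%:R^-1 * \sum_(i < N) ip (dd i) (U D).
  rewrite -ipvv {1}/ip; under eq_bigr => j _ do rewrite {2}DE.
  rewrite UD'.
  have -> : \sum_(i < N) ip (dd i) (\sum_(j < n) D ord0 j *: U (ebasis R j)) =
    \sum_(i < N) \sum_(j < n) D ord0 j * ip (dd i) (U (ebasis R j)).
    by apply: eq_bigr => i _; rewrite ip_sum.
  rewrite exchange_big /= mulr_sumr; apply: eq_bigr => j _.
  by rewrite mulrCA mulr_sumr.
have hb : `|ss D| <= ell1 * enorm (y1 - y2) * ((1 + B) * enorm D).
  rewrite ssD; apply: avg_le => i.
  apply: le_trans (CSabs _ _) _.
  apply: ler_pM; [exact: enorm_ge0 | exact: enorm_ge0 | | exact: enorm_U].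
  by have := hs.2 (W x y1 i) (W x y2 i); rewrite enorm_Wy.
rewrite ger0_norm ?ss_ge0 // -enorm_sq in hb.
have [->|Dn0] := eqVneq (enorm D) 0.
  by rewrite !mulr_ge0 ?enorm_ge0 //; have := B_ge0; lra.
have Dp : 0 < enorm D by rewrite lt_def Dn0 enorm_ge0.
rewrite -(ler_pM2r Dp).
have -> : ell1 * (1 + B) * enorm (y1 - y2) * enorm D =
   ell1 * enorm (y1 - y2) * ((1 + B) * enorm D) by ring.
by rewrite -expr2.
Qed.

End Model.


Lemma final_arith (R : realType) (kd kf ke G dl M P : R) :
  0 < kd -> 0 < kf -> 0 < ke -> 0 < dl -> 1 <= M ->
  dl <= G / ((8 * kf / kd + 2 * ke) * M) ->
  P <= 3 * kf * dl ^+ 2 - kd * (G - 2 * ke * dl) * (dl / M) ->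
  P <= - ((4 * kd * kf) / ((8 * kf + 2 * ke * kd) * M)) * G * dl.
Proof.
move=> kd0 kf0 ke0 dl0 M1 hdl hP.
have M0 : 0 < M by lra.
set A := 8 * kf / kd + 2 * ke.
have A0 : 0 < A by rewrite /A; apply: addr_gt0; [rewrite divr_gt0 //; lra | lra].
set t := G / (A * M).
have Gt : G = A * M * t by rewrite /t; field; apply/andP; split; apply: lt0r_neq0.
have kdA : kd * A = 8 * kf + 2 * ke * kd by rewrite /A; field; apply: lt0r_neq0.
set w := dl / M.
have Mw : M * w = dl by rewrite /w; field; apply: lt0r_neq0.
have w0 : 0 <= w by rewrite /w divr_ge0 //; lra.
have wd : w <= dl by rewrite /w ler_pdivrMr //; nra.
have C1G : (4 * kd * kf) / ((8 * kf + 2 * ke * kd) * M) * G = 4 * kf * t.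
  rewrite Gt -kdA; field; rewrite !lt0r_neq0 //.
rewrite mulNr C1G.
have e1 : kd * G * w = (8 * kf + 2 * ke * kd) * t * dl.
  by rewrite Gt -kdA -Mw; ring.
have h1 : dl * dl <= t * dl by rewrite ler_pM2r //.
have h2 : dl * w <= dl * dl by rewrite ler_pM2l.
have ex : kd * (G - 2 * ke * dl) * w = kd * G * w - 2 * kd * ke * (dl * w) by ring.
rewrite ex e1 expr2 in hP.
have h1' : 3 * kf * (dl * dl) <= 3 * kf * (t * dl) by rewrite ler_pM2l //; lra.
have kdke : 0 < 2 * kd * ke by rewrite !mulr_gt0.
have h2' : 2 * kd * ke * (dl * w) <= 2 * kd * ke * (t * dl).
  by rewrite ler_pM2l //; lra.
have tdl0 : dl <= t := hdl.
have tdl : 0 <= kf * (t * dl).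
  by apply: mulr_ge0; [lra | apply: mulr_ge0; lra].
lra.
Qed.

Lemma gd2_arith (R : realType) (ell1 B ked dl E : R) : 0 < ell1 -> 0 <= B ->
  0 < ked -> 0 < dl -> E <= ked * dl / (ell1 * (1 + B) ^+ 2) ->
  ell1 * (1 + B) * E <= ked * dl.
Proof.
move=> e0 B0 k0 d0 hE.
have k1 : 0 <= ell1 * (1 + B) by rewrite mulr_ge0 //; lra.
apply: le_trans (ler_wpM2l k1 hE) _.
have B1p : 0 < 1 + B by lra.
have -> : ell1 * (1 + B) * (ked * dl / (ell1 * (1 + B) ^+ 2)) = ked * dl / (1 + B).
  by field; rewrite !lt0r_neq0.
have kd0 : 0 <= ked * dl by rewrite mulr_ge0 //; lra.
rewrite ler_pdivrMr // ler_peMr //; lra.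
Qed.

Lemma fv_arith (R : realType) (p1 p0 a1 a0 b1 c0 k X Z : R) :
  p1 - a1 <= k -> a0 - p0 <= k -> a1 - b1 <= Z -> Z <= k -> c0 <= a0 ->
  X <= c0 - b1 -> p1 - p0 <= 3 * k - X.
Proof. lra. Qed.

Lemma glb_arith (R : realType) (a b c e f k1 k2 : R) :
  a - b <= k1 * k2 -> b <= c + e -> e <= f -> f <= k1 * k2 ->
  a - 2 * k1 * k2 <= c.
Proof. lra. Qed.

Unset Implicit Arguments.
Set Strict Implicit.

Theorem lemma4 (R : realType) (n m d : nat)
  (* standing assumptions on l, psi, Y *)
  (l : 'rV[R]_n -> 'rV[R]_m -> 'rV[R]_d -> R)
  (psi : 'rV[R]_n -> 'rV[R]_d)
  (Y : set 'rV[R]_m)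
  (ell1 L1 ell0 L0 mu : R)
  (Hell1 : 0 < ell1) (HL1 : 0 < L1) (Hell0 : 0 < ell0) (HL0 : 0 < L0)
  (Hmu : 0 < mu)
  (Hl_smooth : e_smooth ell1 (uncurry3 l))
  (Hl_lip : e_lipschitz L1 (uncurry3 l))
  (Hpsi_twice : twice_differentiable psi)
  (Hpsi_smooth : e_smoothV ell0 psi)
  (Hpsi_lip : e_lipschitzV L0 psi)
  (HY_ne : Y !=set0) (HY_closed : closed Y) (HY_convex : e_convex_set Y)
  (HY_bounded : e_bounded_set Y)
  (Hl_concave : forall x z, strongly_concave_on mu Y (fun y => l x y z))
  (* the noise: a random vector eps~ in R^d with compact support, zero mean *)
  (dT : measure_display) (T : measurableType dT) (P : probability T R)
  (eps : T -> 'rV[R]_d)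
  (Heps_meas : forall j : 'I_d, measurable_fun setT (fun w => eps w ord0 j))
  (Heps_supp : exists M : R, {ae P, forall w, enorm (eps w) <= M})
  (Heps_mean : forall j : 'I_d, Rintegral P setT (fun w => eps w ord0 j) = 0)
  (* Phi x = max_{y in Y} E[ l(x, y, psi x + eps~) ], assumed differentiable *)
  (HPhi_diff : forall x, differentiable
     (fun x' => sup [set Rintegral P setT (fun w => l x' y (psi x' + eps w))
                    | y in Y]) x)
  (* iteration k: center, radius, constants *)
  (xk : 'rV[R]_n) (deltak deltamax : R)
  (Hdelta : 0 < deltak <= deltamax)
  (kdcp kef ked : R) (Hkdcp : 0 < kdcp) (Hkef : 0 < kef) (Hked : 0 < ked)
  (* local model data *)
  (N : nat) (HN : (0 < N)%N)
  (xs : 'I_N -> 'rV[R]_n) (Hxs : forall i, eball xk deltak (xs i))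
  (ws : 'I_N -> T)   (* realizations eps^i = eps (ws i) *)
  (B1 : 'M[R]_(n, d)) (B0 : 'rV[R]_d)
  (HLS : forall (B1' : 'M[R]_(n, d)) (B0' : 'rV[R]_d),
      \sum_(i < N) enorm (psi (xs i) + eps (ws i) - (xs i *m B1 + B0)) ^+ 2
      <= \sum_(i < N) enorm (psi (xs i) + eps (ws i) - (xs i *m B1' + B0')) ^+ 2)
  (B : R) (HB : fnorm B1 <= B)
  (ykstar : 'rV[R]_n -> 'rV[R]_m)
  (Hykstar : forall x, Y (ykstar x) /\
     forall y, Y y ->
       (N%:R^-1 * \sum_(i < N) l x y (x *m B1 + B0 +
           (psi (xs i) + eps (ws i) - (xs i *m B1 + B0))))
       <= (N%:R^-1 * \sum_(i < N) l x (ykstar x) (x *m B1 + B0 +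
           (psi (xs i) + eps (ws i) - (xs i *m B1 + B0)))))
  (yi : 'rV[R]_n -> 'rV[R]_m)
  (s : 'rV[R]_n) :
  let omega := fun i : 'I_N => psi (xs i) + eps (ws i) in
  let e := fun i : 'I_N => omega i - (xs i *m B1 + B0) in
  let mk := fun (x : 'rV[R]_n) (e' : 'rV[R]_d) => x *m B1 + B0 + e' in
  let Lk := fun x y => N%:R^-1 * \sum_(i < N) l x y (mk x (e i)) in
  let Phik := fun x => sup [set Lk x y | y in Y] in
  let Lfull := fun x y => Rintegral P setT (fun w => l x y (psi x + eps w)) in
  let Phi := fun x => sup [set Lfull x y | y in Y] in
  let ell1hat := ell1 * (1 + B) ^+ 2 in
  let gk := egrad (fun x => Lk x (yi xk)) xk in
  (forall x, eball xk deltak x -> Y (yi x)) ->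
  (forall x, eball xk deltak x ->
     enorm (yi x - ykstar x)
       <= Num.min (ked * deltak / ell1hat) (kef * deltak ^+ 2 / L1)) ->
  enorm s <= deltak ->
  Lk xk (yi xk) - Lk (xk + s) (yi (xk + s))
    >= kdcp * enorm gk * Num.min deltak 1 ->
  (forall x, eball xk deltak x -> `|Phi x - Phik x| <= kef * deltak ^+ 2) ->
  enorm (egrad Phi xk) - enorm (egrad Phik xk) <= ked * deltak ->
  deltak <= enorm (egrad Phi xk)
            / ((8 * kef / kdcp + 2 * ked) * Num.max 1 deltamax) ->
  Phi (xk + s) - Phi xk
    <= - ((4 * kdcp * kef) / ((8 * kef + 2 * ked * kdcp) * Num.max deltamax 1))
         * enorm (egrad Phi xk) * deltak.
Proof.
move=> omega e mk Lk0 Phik Lfull Phi ell1hat gk Hyi Hyclose Hs Hdec Hacc Hgrad Hdel.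
pose F := uncurry3 l.
pose cs := fun i : 'I_N => B0 + e i.
have FW : forall x y i, F (W cs B1 x y i) = l x y (mk x (e i)).
  by move=> x y i; rewrite /F /uncurry3 /W !row_mxKl row_mxKr row_mxKr /mk /cs addrA.
have Lk0E : Lk0 = Lk F cs B1.
  apply: funext => x; apply: funext => y; rewrite /Lk0 /Lk; congr (_ * _).
  by apply: eq_bigr => i _; rewrite FW.
have L1ge0 : 0 <= L1 by exact: ltW.
have ell1ge0 : 0 <= ell1 by exact: ltW.
have dF := Hl_smooth.1.
have Hconc : forall x i, strongly_concave_on mu Y (fun y => F (W cs B1 x y i)).
  move=> x i; have -> : (fun y => F (W cs B1 x y i)) = (fun y => l x y (mk x (e i))).
    by apply: funext => y; rewrite FW.
  exact: Hl_concave.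
have Hys : forall x, Y (ykstar x) /\
    forall y, Y y -> Lk F cs B1 x y <= Lk F cs B1 x (ykstar x).
  move=> x; have [h1 h2] := Hykstar x; split => // y Yy.
  by rewrite -Lk0E; exact: h2.
have PhikE' : forall x, Phik x = Lk F cs B1 x (ykstar x).
  by move=> x; rewrite /Phik Lk0E; exact: (PhikE Hys).
have dan : egrad Phik xk = egrad (fun z => Lk F cs B1 z (ykstar xk)) xk.
  have -> : Phik = (fun z => Lk F cs B1 z (ykstar z)) by apply: funext => z; exact: PhikE'.
  apply/rowP => j; rewrite !mxE.
  exact: (danskin HB HN L1ge0 ell1ge0 Hconc HY_convex Hys Hmu dF Hl_smooth Hl_lip).
have gkE : gk = egrad (fun z => Lk F cs B1 z (yi xk)) xk by rewrite /gk Lk0E.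
rewrite Lk0E in Hdec.
rewrite dan in Hgrad.
set LK := Lk F cs B1 in Hys PhikE' Hdec gkE Hgrad dan.
set x1 := xk + s.
have bx0 : eball xk deltak xk.
  by rewrite /eball /= subrr enormE ss0 sqrtr0; case/andP: Hdelta => /ltW.
have bx1 : eball xk deltak x1.
  by rewrite /eball /= /x1 addrAC subrr add0r.
have dpos : 0 < deltak by case/andP: Hdelta.
set G := enorm (egrad Phi xk).
have a1 := Hacc x1 bx1; have a0 := Hacc xk bx0.
rewrite !PhikE' in a1 a0.
have c1 := Hyclose x1 bx1.
have lip1 := Lk_lipy cs B1 HN Hl_lip x1 (ykstar x1) (yi x1).
rewrite -/F -/LK in lip1.
have e1 : L1 * enorm (ykstar x1 - yi x1) <= kef * deltak ^+ 2.
  rewrite enorm_distC -ler_pdivlMl // mulrC.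
  by apply: le_trans c1 _; rewrite ge_min lexx orbT.
have m0 : LK xk (yi xk) <= LK xk (ykstar xk) by apply: (Hys xk).2; exact: Hyi.
have fv : Phi x1 - Phi xk <= 3 * (kef * deltak ^+ 2)
    - kdcp * enorm gk * Num.min deltak 1.
  move: a1 a0 lip1 => /ler_normlP [a1a a1b] /ler_normlP [a0a a0b] /ler_normlP [l1a l1b].
  rewrite -/x1 in Hdec; rewrite opprB in a0a.
  exact: (fv_arith a1b a0a l1b e1 m0 Hdec).
have c0 := Hyclose xk bx0.
have gd := grad_diff cs HB HN ell1ge0 dF Hl_smooth xk (ykstar xk) (yi xk).
have B0' : 0 <= B := le_trans (sqrtr_ge0 _) HB.
have gd2 : ell1 * (1 + B) * enorm (ykstar xk - yi xk) <= ked * deltak.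
  rewrite enorm_distC; apply: gd2_arith => //.
  by apply: le_trans c0 _; rewrite ge_min lexx.
have tri := enorm_sub_le (egrad (fun z => LK z (ykstar xk)) xk)
   (egrad (fun z => LK z (yi xk)) xk).
rewrite -gkE in gd tri.
have gk_lb : G - 2 * ked * deltak <= enorm gk := glb_arith Hgrad tri gd gd2.
set M := Num.max 1 deltamax.
have M1 : 1 <= M by rewrite le_max lexx.
have dM : deltak <= M by rewrite le_max; case/andP: Hdelta => _ ->; rewrite orbT.
have M0 : 0 < M := lt_le_trans ltr01 M1.
have mn : deltak / M <= Num.min deltak 1.
  rewrite le_min; apply/andP; split; rewrite ler_pdivrMr //.
    by rewrite ler_peMr // ltW.
  by rewrite mul1r.
have dM0 : 0 <= deltak / M by rewrite divr_ge0 // ltW.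
have ge0 : 0 <= enorm gk by exact: enorm_ge0.
have st1 : kdcp * enorm gk * (deltak / M) <= kdcp * enorm gk * Num.min deltak 1.
  by rewrite ler_wpM2l // mulr_ge0 // ltW.
have st2 : kdcp * (G - 2 * ked * deltak) * (deltak / M) <= kdcp * enorm gk * (deltak / M).
  by rewrite ler_wpM2r // ler_wpM2l // ltW.
rewrite (maxC deltamax 1) -/M.
apply: final_arith => //.
apply: le_trans fv _; rewrite mulrA; apply: lerB (lexx _) _.
exact: le_trans st2 st1.
Qed.
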